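(* Every factor-critical edge-stable equimatchable graph is 2-connected.
   Context: All graphs are finite and simple. A graph is equimatchable if all its maximal matchings have the same cardinality; an equimatchable graph $G$ is edge-stable if $G\setminus e$ (delete edge $e$, keep vertices) is equimatchable for every $e\in E(G)$. A graph $G$ is factor-critical if $G-v$ has a perfect matching for every $v\in V(G)$. *)

(* Defs.v *)
(* A finite simple graph is given by a vertex set V : {set T}
   over a finType T together with a symmetric irreflexive adjacency relation
   e : rel T (only its restriction to V matters). *)
From mathcomp Require Import all_boot.
Set Implicit Arguments. Unset Strict Implicit. Unset Printing Implicit Defensive.

Section Graphs.
Variable T : finType.

Definition is_matching (V : {set T}) (e : rel T) (M : {set {set T}}) : Prop :=
  (forall A, A \in M -> exists x y, [/\ x \in V, y \in V, e x y & A = [set x; y]])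
  /\ (forall A B, A \in M -> B \in M -> A != B -> [disjoint A & B]).

Definition maximal_matching (V : {set T}) (e : rel T) (M : {set {set T}}) : Prop :=
  is_matching V e M /\
  (forall M', is_matching V e M' -> M \subset M' -> M' = M).

Definition equimatchable (V : {set T}) (e : rel T) : Prop :=
  forall M1 M2, maximal_matching V e M1 -> maximal_matching V e M2 -> #|M1| = #|M2|.

Definition del_edge (e : rel T) (x y : T) : rel T :=
  [rel a b | e a b && ([set a; b] != [set x; y])].

Definition edge_stable (V : {set T}) (e : rel T) : Prop :=
  equimatchable V e /\
  (forall x y, x \in V -> y \in V -> e x y -> equimatchable V (del_edge e x y)).

Definition perfect_matching (V : {set T}) (e : rel T) (M : {set {set T}}) : Prop :=
  is_matching V e M /\ \bigcup_(A in M) A = V.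

Definition factor_critical (V : {set T}) (e : rel T) : Prop :=
  forall v, v \in V -> exists M, perfect_matching (V :\ v) e M.

Definition connected_graph (V : {set T}) (e : rel T) : Prop :=
  forall x y, x \in V -> y \in V ->
    connect [rel a b | [&& a \in V, b \in V & e a b]] x y.

Definition two_connected (V : {set T}) (e : rel T) : Prop :=
  [/\ 3 <= #|V|, connected_graph V e & forall v, v \in V -> connected_graph (V :\ v) e].

End Graphs.

(* Main.v *)
Require Import Defs.
From mathcomp Require Import all_boot.
From mathcomp Require Import zify.
From Stdlib Require Import Classical.
Set Implicit Arguments. Unset Strict Implicit. Unset Printing Implicit Defensive.

Section Aux.
Variable T : finType.
Implicit Types (V W : {set T}) (e : rel T) (M : {set {set T}}).

Lemma pm_card W e M : irreflexive e -> perfect_matching W e M -> #|M| * 2 = #|W|.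
Proof.
move=> irr [[Hed Hdis] Hcov].
have triv: trivIset M by apply/trivIsetP => A B HA HB; exact: Hdis.
rewrite -Hcov; move/eqP: triv; rewrite /cover => <-.
rewrite (eq_bigr (fun _ => 2)) ?sum_nat_const // => A HA.
case: (Hed A HA) => x [y [_ _ exy ->]]; rewrite cards2.
by case: eqP exy => // ->; rewrite irr.
Qed.

Lemma pm_partner W e M a : symmetric e -> perfect_matching W e M -> a \in W ->
  exists b, [/\ [set a; b] \in M, e a b & b \in W].
Proof.
move=> sym [[Hed _] Hcov] aW.
move: aW; rewrite -{1}Hcov => /bigcupP [A HA aA].
case: (Hed A HA) => p [q [_ _ epq EA]].
have qW : q \in W by rewrite -Hcov; apply/bigcupP; exists A => //; rewrite EA !inE eqxx orbT.
have pW : p \in W by rewrite -Hcov; apply/bigcupP; exists A => //; rewrite EA !inE eqxx.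
move: aA; rewrite EA !inE => /orP [/eqP-> | /eqP->].
  by exists q; split => //; rewrite -EA.
by exists p; split; [rewrite setUC -EA | rewrite sym |].
Qed.

Lemma extend_max V e M : is_matching V e M ->
  exists M', maximal_matching V e M' /\ M \subset M'.
Proof.
move=> HM.
pose B := #|{set T}|.
have Hb : forall S : {set {set T}}, #|S| <= B by move=> S; exact: max_card.
have: B - #|M| <= B - #|M| by [].
move: {2}(B - #|M|) => k.
elim: k M HM => [|k IH] M HM Hk.
  exists M; split => //; split => // M' HM' sub.
  apply/eqP; rewrite eq_sym eqEcard sub /=.
  have := Hb M'; have := Hb M; move: Hk; move: (#|M|) (#|M'|) => m m'; lia.
case: (classic (forall M', is_matching V e M' -> M \subset M' -> M' = M)) => H.
  by exists M.
have [M'' [HM'' [sub ne]]] : exists M'', is_matching V e M'' /\ M \subset M'' /\ M'' <> M.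
  apply: NNPP => C; apply: H => M' H1 H2; apply: NNPP => H3; apply: C; by exists M'.
have lt : #|M| < #|M''|.
  rewrite ltnNge; apply/negP => le; apply: ne; apply/eqP; rewrite eq_sym eqEcard sub.
  by [].
have Hk' : B - #|M''| <= k.
  have := Hb M''; move: Hk lt; move: (#|M|) (#|M''|) => m m'; lia.
have [M' [Hmax sub']] := IH M'' HM'' Hk'.
by exists M'; split => //; apply: subset_trans sub'.
Qed.

End Aux.

Section Main.
Variable T : finType.

Lemma no_cut (V : {set T}) (e : rel T) v x y :
  symmetric e -> irreflexive e -> factor_critical V e -> edge_stable V e ->
  v \in V -> x \in V :\ v -> y \in V :\ v ->
  connect [rel p q | [&& p \in V :\ v, q \in V :\ v & e p q]] x y.
Proof.
move=> sym irr fc [_ es] vV xVv yVv.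
set R := [rel p q | [&& p \in V :\ v, q \in V :\ v & e p q]].
apply: NNPP => nxy.
have symR : connect_sym R.
  apply: sym_connect_sym => p q /=; rewrite (sym p q).
  by case: (p \in _); case: (q \in _).
have inVv : forall z, z \in V :\ v -> z \in V by move=> z; rewrite in_setD1 => /andP[].
have neqv : forall z, z \in V :\ v -> z != v by move=> z; rewrite in_setD1 => /andP[].
have Rcon : forall p q, p \in V :\ v -> q \in V :\ v -> e p q -> connect R p q.
  by move=> p q Hp Hq Hpq; apply: connect1; rewrite /= Hp Hq.
have [c [cVv evc]] : exists c, c \in V :\ v /\ e v c.
  have [P HP] := fc x (inVv _ xVv).
  have vVx : v \in V :\ x by rewrite in_setD1 vV andbT eq_sym neqv.
  have [c [_ evc cVx]] := pm_partner sym HP vVx.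
  exists c; split => //; rewrite in_setD1.
  move: cVx; rewrite in_setD1 => /andP[_ ->]; rewrite andbT.
  by apply/eqP => E; move: evc; rewrite E irr.
have [a [aVv nca]] : exists a, a \in V :\ v /\ ~~ connect R c a.
  case Ecx: (connect R c x); last by exists x; rewrite Ecx.
  exists y; split => //; apply/negP => cy; apply: nxy.
  by rewrite symR in Ecx; exact: connect_trans Ecx cy.
have [N HN] := fc v vV.
have Ncov : forall B z, B \in N -> z \in B -> z \in V :\ v.
  move=> B z HB Hz; case: HN => _ <-; by apply/bigcupP; exists B.
have [b [abN eab bVv]] := pm_partner sym HN aVv.
have [d [cdN ecd dVv]] := pm_partner sym HN cVv.
have Rab := Rcon _ _ aVv bVv eab.
have Rcd := Rcon _ _ cVv dVv ecd.
have ncb : ~~ connect R c b.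
  apply/negP => cb; move/negP: nca; apply; rewrite symR in Rab.
  exact: connect_trans cb Rab.
have nda : forall z, ~~ connect R c z -> ~~ connect R d z.
  move=> z H; apply/negP => dz; move/negP: H; apply; exact: connect_trans Rcd dz.
have ned : forall z, z \in V :\ v -> ~~ connect R c z -> ~~ e z d.
  move=> z Hz H; apply/negP => ezd; move/negP: (nda z H); apply.
  by apply: Rcon => //; rewrite sym.
have neq_c : forall z, ~~ connect R c z -> z != c.
  by move=> z H; apply/eqP => E; move: H; rewrite E connect0.
have neq_d : forall z, ~~ connect R c z -> z != d.
  by move=> z H; apply/eqP => E; move/negP: (nda z H); rewrite E connect0.
have ead := ned _ aVv nca.
have ebd := ned _ bVv ncb.
have ac := neq_c _ nca. have bc := neq_c _ ncb.
have ad := neq_d _ nca. have bd := neq_d _ ncb.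
have abcd : [set c; d] != [set a; b].
  apply/eqP => E; have : a \in [set c; d] by rewrite E set21.
  by rewrite !inE (negbTE ac) (negbTE ad).
set e' := del_edge e a b.
set M1 := [set v; c] |: (N :\ [set a; b] :\ [set c; d]).
have vcab : [set v; c] != [set a; b].
  apply/eqP => E; have : v \in [set a; b] by rewrite -E set21.
  by rewrite !inE => /orP[] /eqP E'; [move: (neqv _ aVv) | move: (neqv _ bVv)];
    rewrite -E' eqxx.
have vB : forall B, B \in N -> v \notin B.
  by move=> B HB; apply/negP => /(Ncov _ _ HB); rewrite in_setD1 eqxx.
have [[HNe HNd] _] := HN.
have M1m : is_matching V e' M1.
  split.
    move=> A; rewrite in_setU1 => /orP[/eqP -> | ].
      by exists v, c; split; [by [] | exact: inVv | rewrite /e' /del_edge /= evc vcab | by []].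
    rewrite !in_setD1 => /and3P[_ Aab AN].
    have [p [q [pV qV epq EA]]] := HNe A AN.
    exists p, q; split; [exact: inVv | exact: inVv | | by []].
    by rewrite /e' /del_edge /= epq -EA.
  have dvc : forall B, B \in N :\ [set a; b] :\ [set c; d] -> [disjoint [set v; c] & B].
    move=> B; rewrite !in_setD1 => /and3P[Bcd _ BN].
    rewrite -setI_eq0; apply/eqP/setP => z; rewrite !inE.
    apply/negbTE/negP => /andP[/orP[] /eqP -> zB].
      by move/negP: (vB _ BN).
    have := HNd _ _ cdN BN; rewrite eq_sym Bcd => /(_ isT) dis.
    by move: zB; rewrite (disjointFr dis) // set21.
  move=> A B; rewrite !in_setU1 => /orP[/eqP -> | HA] /orP[/eqP -> | HB] AB.
  - by rewrite eqxx in AB.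
  - exact: dvc.
  - by rewrite disjoint_sym; apply: dvc.
  - by move: HA HB; rewrite !in_setD1 => /and3P[_ _ HA] /and3P[_ _ HB]; apply: HNd.
have M1max : maximal_matching V e' M1.
  split => // M' [Hed' Hdis'] sub.
  apply/eqP; rewrite eqEsubset sub andbT; apply/subsetP => A HA.
  apply/negPn/negP => nA.
  have notcov : forall z B, z \in A -> B \in M1 -> z \in B -> False.
    move=> z B zA HB zB.
    have AB : A != B by apply/eqP => E; move: nA; rewrite E HB.
    have := Hdis' _ _ HA (subsetP sub _ HB) AB => dis.
    by move: zB; rewrite (disjointFr dis zA).
  have key : forall z, z \in A -> z \in V -> [|| z == a, z == b | z == d].
    move=> z zA zV.
    case: (eqVneq z v) => [zv | zv].
      exfalso; apply: (notcov z [set v; c]) => //; first by rewrite in_setU1 eqxx.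
      by rewrite zv set21.
    have zVv : z \in V :\ v by rewrite in_setD1 zv.
    have [w [zwN _ _]] := pm_partner sym HN zVv.
    case: (eqVneq [set z; w] [set a; b]) => [E | E1].
      have : z \in [set a; b] by rewrite -E set21.
      by rewrite !inE => /orP[] ->; rewrite ?orbT.
    case: (eqVneq [set z; w] [set c; d]) => [E | E2].
      have : z \in [set c; d] by rewrite -E set21.
      rewrite !inE => /orP[/eqP zc | ->]; last by rewrite !orbT.
      exfalso; apply: (notcov z [set v; c]) => //; first by rewrite in_setU1 eqxx.
      by rewrite zc set22.
    exfalso; apply: (notcov z [set z; w]) => //; last by rewrite set21.
    by rewrite in_setU1 !in_setD1 E1 E2 zwN !orbT.
  have [p [q [pV qV epq EA]]] := Hed' A HA.
  have kp := key p (ltac:(by rewrite EA set21)) pV.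
  have kq := key q (ltac:(by rewrite EA set22)) qV.
  move: epq; rewrite /e' /del_edge /= => /andP[epq nab].
  move: kp kq => /or3P[] /eqP Ep /or3P[] /eqP Eq; subst p q;
    rewrite ?irr // in epq.
  - by rewrite eqxx in nab.
  - by rewrite (negbTE ead) in epq.
  - by rewrite setUC eqxx in nab.
  - by rewrite (negbTE ebd) in epq.
  - by rewrite sym (negbTE ead) in epq.
  - by rewrite sym (negbTE ebd) in epq.
have aV := inVv _ aVv. have bV := inVv _ bVv.
have eqm := es a b aV bV eab.
have [Q HQ] := fc a aV.
have Qm : is_matching V e' Q.
  have [[HQe HQd] HQc] := HQ; split => // A HAQ.
  have [p [q [pV qV epq EA]]] := HQe A HAQ.
  exists p, q; split; [exact: (subsetP (subD1set V a)) | exact: (subsetP (subD1set V a)) | | by []].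
  rewrite /e' /del_edge /= epq /=; apply/eqP => E.
  have : a \in [set p; q] by rewrite E set21.
  rewrite -EA => aA.
  have : a \in V :\ a by rewrite -HQc; apply/bigcupP; exists A.
  by rewrite in_setD1 eqxx.
have [Q' [HQ' subQ]] := extend_max Qm.
have E1 := eqm _ _ HQ' M1max.
have cQ := pm_card irr HQ.
have cN := pm_card irr HN.
have le := subset_leq_card subQ.
have cV1 := cardsD1 a V. have cV2 := cardsD1 v V.
rewrite aV vV in cV1 cV2.
have cM1 : #|M1| = #|N :\ [set a; b] :\ [set c; d]|.+1.
  have nin : [set v; c] \notin N :\ [set a; b] :\ [set c; d].
    by rewrite !in_setD1; apply/negP => /and3P[_ _ /vB]; rewrite set21.
  by rewrite /M1 cardsU1 nin.
have cN1 := cardsD1 [set a; b] N. have cN2 := cardsD1 [set c; d] (N :\ [set a; b]).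
rewrite abN in cN1; rewrite in_setD1 abcd cdN in cN2.
move: E1 cQ cN le cV1 cV2 cM1 cN1 cN2.
move: #|Q'| #|M1| #|Q| #|V :\ a| #|N| #|V :\ v| #|V| #|N :\ [set a; b]| #|N :\ [set a; b] :\ [set c; d]|.
clear; move=> n1 n2 n3 n4 n5 n6 n7 n8 n9; simpl; lia.
Qed.

End Main.


Theorem corollary3p9 (T : finType) (V : {set T}) (e : rel T) :
  symmetric e -> irreflexive e -> 1 < #|V| ->
  factor_critical V e -> edge_stable V e -> two_connected V e.
Proof.
move=> sym irr V1 fc es.
have [v vV] : exists v, v \in V by apply/set0Pn; rewrite -card_gt0; apply: ltnW.
have V3 : 3 <= #|V|.
  have [N HN] := fc v vV.
  have cN := pm_card irr HN.
  have := cardsD1 v V; rewrite vV; move: cN V1.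
  move: #|N| #|V :\ v| #|V|; clear; move=> n1 n2 n3; simpl; lia.
have cut : forall v, v \in V -> connected_graph (V :\ v) e.
  by move=> w wV x y Hx Hy; apply: no_cut.
split => // x y xV yV.
case: (eqVneq x y) => [-> | xy]; first exact: connect0.
have [w wV] : exists w, w \in V :\ x :\ y.
  apply/set0Pn; rewrite -card_gt0.
  have := cardsD1 x V; have := cardsD1 y (V :\ x).
  rewrite xV in_setD1 yV eq_sym xy; move: V3.
  move: #|V| #|V :\ x| #|V :\ x :\ y|; clear; move=> n1 n2 n3; simpl; lia.
move: wV; rewrite !in_setD1 => /and3P[wy wx wV].
have := cut w wV x y; rewrite !in_setD1 eq_sym wx xV eq_sym wy yV => /(_ isT isT).
apply: connect_sub => p q /= /and3P[Hp Hq Hpq]; apply: connect1.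
by move: Hp Hq; rewrite /= !in_setD1 => /andP[_ ->] /andP[_ ->].
Qed.
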